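(* Let $D$ be an $m\times n$ array and $h$ a positive integer. Let $D\otimes J_{h,1}$ be the $mh\times n$ array in which cell $((r-1)h+s,\,c)$, for $r\in[1,m]$, $s\in[1,h]$, $c\in[1,n]$, is filled if and only if $(r,c)$ is filled in $D$. Then the $h$-knight is a solution to $T(D)$ if and only if the bishop is a solution to $T(D\otimes J_{h,1})$.
   Context: Arrays are partially filled and toroidal; $F(B)$ denotes the filled cells; every row and column contains a filled cell. $s_R(i,j)=(i,j+t)$, $s_C(i,j)=(i+t,j)$ with $t\ge1$ minimal such that the cell is filled. The $a$-knight is $N_a=s_C\circ s_R^{a}$; the bishop is $N_1=s_C\circ s_R$. A move function is a solution to $T(B)$ if it is a permutation of $F(B)$ forming a single cycle of length $|F(B)|$. *)

(* Defs.v *)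
From mathcomp Require Import all_boot.
Set Implicit Arguments. Unset Strict Implicit. Unset Printing Implicit Defensive.

(* An m x n (toroidal) partially filled array is represented by its set of
   filled cells F(B) : {set 'I_m * 'I_n}; rows/columns are 0-indexed. *)

Definition wf_array m n (B : {set 'I_m * 'I_n}) : Prop :=
  (forall i : 'I_m, exists j : 'I_n, (i, j) \in B) /\
  (forall j : 'I_n, exists i : 'I_m, (i, j) \in B).

Lemma ord_pos n (j : 'I_n) : 0 < n.
Proof. exact: leq_ltn_trans (leq0n j) (ltn_ord j). Qed.

Definition ord_add n (j : 'I_n) (k : nat) : 'I_n :=
  Ordinal (ltn_pmod (j + k) (ord_pos j)).

Definition row_gap m n (B : {set 'I_m * 'I_n}) (x : 'I_m * 'I_n) : nat :=
  (find (fun t => (x.1, ord_add x.2 t.+1) \in B) (iota 0 n)).+1.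

Definition col_gap m n (B : {set 'I_m * 'I_n}) (x : 'I_m * 'I_n) : nat :=
  (find (fun t => (ord_add x.1 t.+1, x.2) \in B) (iota 0 m)).+1.

Definition sR m n (B : {set 'I_m * 'I_n}) (x : 'I_m * 'I_n) : 'I_m * 'I_n :=
  (x.1, ord_add x.2 (row_gap B x)).

Definition sC m n (B : {set 'I_m * 'I_n}) (x : 'I_m * 'I_n) : 'I_m * 'I_n :=
  (ord_add x.1 (col_gap B x), x.2).

Definition knight m n (B : {set 'I_m * 'I_n}) (a : nat) : 'I_m * 'I_n -> 'I_m * 'I_n :=
  fun x => sC B (iter a (sR B) x).

Definition bishop m n (B : {set 'I_m * 'I_n}) := knight B 1.

Definition is_solution m n (B : {set 'I_m * 'I_n})
    (f : 'I_m * 'I_n -> 'I_m * 'I_n) : Prop :=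
  [/\ {in B, forall x, f x \in B},
      {in B &, injective f} &
      {in B, forall x, order f x = #|B| } ].

(* D (x) J_{h,1}: the (m*h) x n array whose cell (R, c) is filled iff
   (R %/ h, c) is filled in D (0-indexed version of ((r-1)h+s, c)). *)
Definition kron_col m n (h : nat) (D : {set 'I_m * 'I_n}) : {set 'I_(m * h) * 'I_n} :=
  [set x : 'I_(m * h) * 'I_n |
     [exists y in D, (x.1 %/ h == y.1 :> nat) && (x.2 == y.2 :> nat)]].

(* Main.v *)
Require Import Defs.
From mathcomp Require Import all_boot zify.
Set Implicit Arguments. Unset Strict Implicit. Unset Printing Implicit Defensive.

Definition cyc (T : finType) (f : T -> T) (B : {set T}) : Prop :=
  {in B, forall x, f x \in B} /\ {in B, forall x k, (iter k f x == x) = (#|B| %| k)}.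

Lemma iter_mulP (T : Type) (f : T -> T) x N q : iter N f x = x -> iter (N * q) f x = x.
Proof.
move=> H; elim: q => [|q IH]; first by rewrite muln0.
by rewrite mulnS iterD IH H.
Qed.

Lemma sol_cyc m n (f : _ -> _) (B : {set 'I_m * 'I_n}) :
  is_solution B f <-> cyc f B.
Proof.
split.
- case=> fB finj ford; split => // x xB k.
  have Hi := iter_order_in fB finj xB.
  rewrite (ford x xB) in Hi.
  apply/eqP/idP => [Hk|/dvdnP[q ->]]; last by rewrite mulnC iter_mulP.
  move: Hk; rewrite {1}(divn_eq k #|B|) addnC iterD mulnC iter_mulP // => Hr.
  case: (posnP (k %% #|B|)) => [r0|r0]; first by apply/dvdnP; exists (k %/ #|B|); rewrite {1}(divn_eq k #|B|) r0 addn0.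
  have Bn : 0 < #|B| by rewrite card_gt0; apply/set0Pn; exists x.
  have := findex_iter (f:=f) (x:=x) (i:=k %% #|B|).
  rewrite ford // ltn_pmod // Hr findex0 => /(_ isT) H0.
  by rewrite -H0 in r0.
- case=> fB Hc.
  have Hx : {in B, forall x, iter #|B| f x = x} by move=> x xB; apply/eqP; rewrite Hc.
  have finj : {in B &, injective f}.
    move=> x y xB yB E.
    have : 0 < #|B| by rewrite card_gt0; apply/set0Pn; exists x.
    case Hn: #|B| => [//|n0] _.
    by rewrite -(Hx x xB) -(Hx y yB) Hn !iterSr E.
  split => // x xB; apply/eqP; rewrite eqn_leq; apply/andP; split.
  + rewrite /order; apply: subset_leq_card; apply/subsetP => y.
    rewrite inE fconnect_orbit => /trajectP[i _ ->].
    exact: iter_in.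
  + apply: dvdn_leq; first exact: order_gt0.
    by rewrite -(Hc x xB) (iter_order_in fB finj xB).
Qed.

Lemma cyc_one (T : finType) (f : T -> T) (B : {set T}) x0 P :
  {in B, forall x, f x \in B} -> x0 \in B ->
  (forall k, (iter k f x0 == x0) = (P %| k)) -> #|B| <= P -> cyc f B.
Proof.
move=> fB x0B H BP.
have fB' : {homo f : x / x \in B} by [].
have HP : iter P f x0 = x0 by apply/eqP; rewrite H.
have Hd : forall i j, i < j -> j < P -> iter i f x0 != iter j f x0.
  move=> i j ij jP; apply/eqP => E.
  have : iter (P - j + i) f x0 == x0 by rewrite iterD E -iterD subnK ?HP // ltnW.
  rewrite H => /dvdn_leq; lia.
pose g (i : 'I_P) := iter i f x0.
have ginj : injective g.
  move=> i j E; apply/val_inj; case: (ltngtP i j) => // ij.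
  - by move: (Hd _ _ ij (ltn_ord j)); rewrite /g in E; rewrite E eqxx.
  - by move: (Hd _ _ ij (ltn_ord i)); rewrite /g in E; rewrite E eqxx.
have SB : g @: 'I_P \subset B by apply/subsetP => _ /imsetP[i _ ->]; exact: iter_in.
have cS : #|g @: 'I_P| = P by rewrite card_imset // card_ord.
have SBe : g @: 'I_P = B by apply/eqP; rewrite eqEcard SB cS.
have cB : #|B| = P by rewrite -SBe.
split => // x; rewrite cB -SBe => /imsetP[i _ ->] k; rewrite /g -iterD.
apply/eqP/idP => [E|/dvdnP[q ->]]; last by rewrite addnC iterD mulnC iter_mulP.
rewrite -H; apply/eqP.
have := congr1 (iter (P - i) f) E.
by rewrite -!iterD addnCA subnK ?(ltnW (ltn_ord i)) // iterD HP.
Qed.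

Lemma find_iota_eq (P : pred nat) n t :
  t < n -> P t -> (forall u, u < t -> ~~ P u) -> find P (iota 0 n) = t.
Proof.
move=> tn Pt Hu.
have hs : has P (iota 0 n) by apply/hasP; exists t => //; rewrite mem_iota.
have fl : find P (iota 0 n) < n by rewrite -{2}(size_iota 0 n) -has_find.
case: (ltngtP (find P (iota 0 n)) t) => // H.
- by move: (nth_find 0 hs); rewrite nth_iota // add0n (negbTE (Hu _ H)).
- by move: (before_find 0 H); rewrite nth_iota // add0n Pt.
Qed.

Lemma find_iota_P (P : pred nat) n t :
  t < n -> P t -> P (find P (iota 0 n)) /\ find P (iota 0 n) < n
    /\ (forall u, u < find P (iota 0 n) -> ~~ P u).
Proof.
move=> tn Pt.
have hs : has P (iota 0 n) by apply/hasP; exists t => //; rewrite mem_iota.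
have fl : find P (iota 0 n) < n by rewrite -{2}(size_iota 0 n) -has_find.
split; first by move: (nth_find 0 hs); rewrite nth_iota.
split => // u uf; move: (before_find 0 uf); rewrite nth_iota ?add0n => [->//|].
exact: ltn_trans fl.
Qed.

Lemma ord_add_n n (j : 'I_n) : ord_add j n = j.
Proof. by apply/val_inj => /=; rewrite modnDr modn_small. Qed.

Lemma sR_in m n (B : {set 'I_m * 'I_n}) x : x \in B -> sR B x \in B.
Proof.
move=> xB; rewrite /sR /row_gap.
have n0 := ord_pos x.2.
have [H _] := @find_iota_P (fun t => (x.1, ord_add x.2 t.+1) \in B) n n.-1
  ltac:(lia) ltac:(by rewrite /= prednK // ord_add_n -surjective_pairing).
exact: H.
Qed.

Lemma sC_in m n (B : {set 'I_m * 'I_n}) x : x \in B -> sC B x \in B.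
Proof.
move=> xB; rewrite /sC /col_gap.
have m0 := ord_pos x.1.
have [H _] := @find_iota_P (fun t => (ord_add x.1 t.+1, x.2) \in B) m m.-1
  ltac:(lia) ltac:(by rewrite /= prednK // ord_add_n -surjective_pairing).
exact: H.
Qed.

Lemma knight_in m n (B : {set 'I_m * 'I_n}) a x : x \in B -> knight B a x \in B.
Proof. move=> xB; apply: sC_in; exact: (iter_in _ (@sR_in m n B)). Qed.

Lemma lt_mul_add q m w h : q < m -> w < h -> q * h + w < m * h.
Proof.
move=> qm wh; have : q.+1 * h <= m * h by rewrite leq_mul2r qm orbT.
rewrite mulSn; lia.
Qed.

Lemma KL2 a m h w : 0 < m -> w < h -> (a * h + w) %% (m * h) = (a %% m) * h + w.
Proof.
move=> m0 wh; rewrite {1}(divn_eq a m) mulnDl -addnA -mulnA modnMDl modn_small //.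
by apply: lt_mul_add; rewrite ?ltn_pmod.
Qed.

Lemma KL a m h w : 0 < m -> w < h -> ((a * h + w) %% (m * h)) %/ h = a %% m.
Proof.
move=> m0 wh; rewrite KL2 // divnMDl ?divn_small ?addn0 //; lia.
Qed.

Lemma divh_lt m h (R : 'I_(m * h)) : R %/ h < m.
Proof.
case: h R => [|h] [r]; first by rewrite muln0.
by move=> Hr /=; rewrite ltn_divLR.
Qed.

Definition projR m h (R : 'I_(m * h)) : 'I_m := Ordinal (divh_lt R).

Lemma memK m n h (D : {set 'I_m * 'I_n}) (x : 'I_(m * h) * 'I_n) :
  (x \in kron_col h D) = ((projR x.1, x.2) \in D).
Proof.
rewrite inE; apply/existsP/idP => [[y /andP[yD /andP[/eqP e1 /eqP e2]]]|H].
  by have -> : (projR x.1, x.2) = y by case: y yD e1 e2 => a b /= _ e1 e2; congr pair; apply/val_inj.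
by exists (projR x.1, x.2); rewrite H /= !eqxx.
Qed.

Lemma sR_E m n h (D : {set 'I_m * 'I_n}) (x : 'I_(m * h) * 'I_n) :
  sR (kron_col h D) x = (x.1, (sR D (projR x.1, x.2)).2).
Proof.
rewrite /sR /row_gap /=; congr (_, ord_add _ _.+1); apply: eq_find => t.
by rewrite memK.
Qed.

Lemma sC_E m n h (D : {set 'I_m * 'I_n}) (z : 'I_(m * h) * 'I_n) :
  0 < h -> z \in kron_col h D ->
  val (sC (kron_col h D) z).1 =
    (if (z.1 %% h).+1 < h then (val z.1).+1
     else val (sC D (projR z.1, z.2)).1 * h) /\ (sC (kron_col h D) z).2 = z.2.
Proof.
move=> h0 zE; split => //.
have m0 : 0 < m by apply: (ord_pos (projR z.1)).
have mh0 : 0 < m * h by apply: (ord_pos z.1).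
set R := z.1.
have Rq : val R = (R %/ h) * h + R %% h by rewrite -divn_eq.
have qm : R %/ h < m := divh_lt R.
have rh : R %% h < h by rewrite ltn_pmod.
case: ifP => Hr.
- rewrite /sC /col_gap /=.
  have -> : find (fun t => (ord_add R t.+1, z.2) \in kron_col h D) (iota 0 (m * h)) = 0.
    apply: find_iota_eq => //; rewrite memK /=.
    have -> : projR (ord_add R 1) = projR R.
      apply/val_inj => /=.
      rewrite Rq -addn1 -addnA KL //; last by lia.
      by rewrite modn_small // divnMDl // (divn_small rh) addn0.
    by move: zE; rewrite memK.
  rewrite /= modn_small ?addn1 //.
  rewrite Rq; have := lt_mul_add qm Hr; lia.
- have Rh : (R %% h).+1 = h by apply/eqP; rewrite eqn_leq rh; move/negbT: Hr; rewrite -leqNgt.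
  set y := (projR R, z.2).
  have yD : y \in D by move: zE; rewrite memK.
  have [PD [tm Hu]] := @find_iota_P (fun t => (ord_add y.1 t.+1, y.2) \in D) m m.-1
    ltac:(lia) ltac:(by rewrite /= prednK // ord_add_n).
  set tD := find _ (iota 0 m) in PD tm Hu.
  rewrite /sC /col_gap /=.
  have -> : find (fun t => (ord_add R t.+1, z.2) \in kron_col h D) (iota 0 (m * h)) = tD * h.
    apply: find_iota_eq.
    + by rewrite ltn_pmul2r.
    + rewrite memK /=.
      have -> : projR (ord_add R (tD * h).+1) = ord_add y.1 tD.+1.
        apply/val_inj => /=.
        have -> : R + (tD * h).+1 = (R %/ h + tD.+1) * h + 0.
          by rewrite addn0 mulnDl mulSn; lia.
        by rewrite KL.
      exact: PD.
    + move=> u uh; rewrite memK /=.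
      have uq : u %/ h < tD by rewrite ltn_divLR.
      have -> : projR (ord_add R u.+1) = ord_add y.1 (u %/ h).+1.
        apply/val_inj => /=.
        have -> : R + u.+1 = (R %/ h + (u %/ h).+1) * h + u %% h.
          by rewrite mulnDl mulSn {1}(divn_eq u h); lia.
        by rewrite KL // ltn_pmod.
      exact: Hu.
  have -> : R + (tD * h).+1 = (R %/ h + tD.+1) * h + 0.
    by rewrite addn0 mulnDl mulSn; lia.
  by rewrite KL2 // addn0.
Qed.

Lemma bishop_E m n h (D : {set 'I_m * 'I_n}) (x : 'I_(m * h) * 'I_n) :
  0 < h -> x \in kron_col h D ->
  val (bishop (kron_col h D) x).1 =
    (if (x.1 %% h).+1 < h then (val x.1).+1
     else val (knight D 1 (projR x.1, x.2)).1 * h) /\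
  (bishop (kron_col h D) x).2 = (sR D (projR x.1, x.2)).2.
Proof.
move=> h0 xE.
have -> : bishop (kron_col h D) x = sC (kron_col h D) (sR (kron_col h D) x) by [].
rewrite sR_E.
have zE : (x.1, (sR D (projR x.1, x.2)).2) \in kron_col h D.
  by rewrite memK; exact: (@sR_in _ _ D (projR x.1, x.2) ltac:(by rewrite -memK)).
exact: (sC_E h0 zE).
Qed.

Lemma iter_sR_1 m n (B : {set 'I_m * 'I_n}) s y : (iter s (sR B) y).1 = y.1.
Proof. by elim: s => //= s ->. Qed.

Definition relK m n h (x : 'I_(m * h) * 'I_n) (y : 'I_m * 'I_n) :=
  val x.1 = y.1 * h /\ x.2 = y.2.

Lemma rel_eq m n h (x x' : 'I_(m * h) * 'I_n) (y y' : 'I_m * 'I_n) :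
  0 < h -> relK x y -> relK x' y' -> (x == x') = (y == y').
Proof.
move=> h0; case: x x' y y' => [a b] [a' b'] [c d] [c' d'] [/= e1 e2] [/= e1' e2'].
subst; apply/eqP/eqP => [[E1 ->]|[E1 ->]].
- by congr pair; apply/val_inj/eqP; rewrite -(eqn_pmul2r h0) -e1 -e1' E1.
- by congr pair; apply/val_inj; rewrite /= e1 e1' E1.
Qed.

Lemma iter_s m n h (D : {set 'I_m * 'I_n}) x y s :
  0 < h -> y \in D -> relK x y -> s < h ->
  val (iter s (bishop (kron_col h D)) x).1 = y.1 * h + s /\
  (iter s (bishop (kron_col h D)) x).2 = (iter s (sR D) y).2.
Proof.
move=> h0 yD [r1 r2]; elim: s => [|s IH] sh; first by rewrite addn0.
have [IH1 IH2] := IH (ltnW sh).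
set x' := iter s (bishop (kron_col h D)) x.
have Hp : (projR x'.1, x'.2) = iter s (sR D) y.
  rewrite [RHS]surjective_pairing -IH2; congr pair; apply/val_inj.
  by rewrite /= IH1 iter_sR_1 divnMDl // divn_small ?addn0 // ltnW.
have x'E : x' \in kron_col h D by rewrite memK Hp; apply: iter_in => //; exact: sR_in.
have [b1 b2] := bishop_E h0 x'E.
rewrite iterS -/x' b1 b2 Hp IH1 modnMDl modn_small ?sh ?addnS; last exact: ltnW.
by rewrite IH1.
Qed.

Lemma step_h m n h (D : {set 'I_m * 'I_n}) x y :
  0 < h -> y \in D -> relK x y -> relK (iter h (bishop (kron_col h D)) x) (knight D h y).
Proof.
move=> h0 yD r.
case: h h0 x r => [//|h'] h0 x r.
have [IH1 IH2] := iter_s h0 yD r (ltnSn h').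
set x' := iter h' (bishop (kron_col h'.+1 D)) x.
have Hp : (projR x'.1, x'.2) = iter h' (sR D) y.
  rewrite [RHS]surjective_pairing -IH2; congr pair; apply/val_inj.
  by rewrite /= IH1 iter_sR_1 divnMDl // divn_small ?addn0.
have x'E : x' \in kron_col h'.+1 D by rewrite memK Hp; apply: iter_in => //; exact: sR_in.
have [b1 b2] := bishop_E h0 x'E.
rewrite /relK iterS -/x' b1 b2 Hp IH1 modnMDl modn_small // ltnn.
by rewrite /knight iterS.
Qed.

Lemma step_hj m n h (D : {set 'I_m * 'I_n}) x y j :
  0 < h -> y \in D -> relK x y ->
  relK (iter (h * j) (bishop (kron_col h D)) x) (iter j (knight D h) y).
Proof.
move=> h0 yD r; elim: j => [|j IH]; first by rewrite muln0.
rewrite mulnS iterD iterS; apply: step_h => //.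
by apply: iter_in => //; exact: knight_in.
Qed.

Lemma level m n h (D : {set 'I_m * 'I_n}) x :
  0 < h -> x \in kron_col h D ->
  val (bishop (kron_col h D) x).1 %% h = (val x.1).+1 %% h.
Proof.
move=> h0 xE; have [b1 _] := bishop_E h0 xE.
rewrite b1; case: ifP => // Hr.
have Rh : (x.1 %% h).+1 = h.
  by apply/eqP; rewrite eqn_leq ltn_pmod //; move/negbT: Hr; rewrite -leqNgt.
change (\val x.1) with (nat_of_ord x.1).
have -> : (nat_of_ord x.1).+1 = (x.1 %/ h).+1 * h by rewrite mulSnr {1}(divn_eq x.1 h); lia.
by rewrite !modnMl.
Qed.

Lemma level_iter m n h (D : {set 'I_m * 'I_n}) x k :
  0 < h -> x \in kron_col h D ->
  val (iter k (bishop (kron_col h D)) x).1 %% h = (val x.1 + k) %% h.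
Proof.
move=> h0 xE; elim: k => [|k IH]; first by rewrite addn0.
rewrite iterS level //; last by apply: iter_in => //; exact: knight_in.
by rewrite -addn1 -modnDml IH modnDml addn1 addnS.
Qed.

Lemma card_E m n h (D : {set 'I_m * 'I_n}) (h0 : 0 < h) :
  #|kron_col h D| = #|D| * h.
Proof.
apply/eqP; rewrite eqn_leq; apply/andP; split.
- pose G (x : 'I_(m * h) * 'I_n) : ('I_m * 'I_n) * 'I_h :=
    ((projR x.1, x.2), Ordinal (ltn_pmod x.1 h0)).
  have Ginj : injective G.
    move=> [a b] [a' b'] [/= E1 E2 E3]; subst.
    congr pair; apply/val_inj => /=.

    by rewrite (divn_eq a h) (divn_eq a' h) E1 E3.
  have S : G @: kron_col h D \subset setX D [set: 'I_h].
    apply/subsetP => _ /imsetP[x xE ->].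
    by rewrite inE /= -memK xE in_setT.
  rewrite -(card_imset _ Ginj).
  by apply: leq_trans (subset_leq_card S) _; rewrite cardsX cardsT card_ord.
- have lt0 (p : ('I_m * 'I_n) * 'I_h) : p.1.1 * h + p.2 < m * h.
    exact: lt_mul_add.
  pose F (p : ('I_m * 'I_n) * 'I_h) : 'I_(m * h) * 'I_n := (Ordinal (lt0 p), p.1.2).
  have Finj : injective F.
    move=> [[a b] c] [[a' b'] c'] [/= E1 E2]; subst.
    have e1 : a = a' :> nat.
      by have := congr1 (divn^~ h) E1; rewrite /= !divnMDl // !divn_small // !addn0.
    have e2 : c = c' :> nat.
      by have := congr1 (modn^~ h) E1; rewrite /= !modnMDl !modn_small.
    by congr (_, _, _); apply/val_inj.
  have S : F @: setX D [set: 'I_h] \subset kron_col h D.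
    apply/subsetP => _ /imsetP[[[a b] c] /setXP[abD _] ->].
    rewrite memK /=.
    suff -> : projR (Ordinal (lt0 (a, b, c))) = a by [].
    by apply/val_inj; rewrite /= divnMDl // divn_small // addn0.
  have := subset_leq_card S; rewrite (card_imset _ Finj) cardsX cardsT card_ord.
  by [].
Qed.

Theorem lemma4p1 (m n h : nat) (D : {set 'I_m * 'I_n}) :
  0 < h -> wf_array D ->
  (is_solution D (knight D h) <->
   is_solution (kron_col h D) (bishop (kron_col h D))).
Proof.
move=> h0 _; rewrite !sol_cyc.
set E := kron_col h D; set f := bishop E; set g := knight D h.
have fE : {in E, forall x, f x \in E} by move=> x; exact: knight_in.
have gD : {in D, forall y, g y \in D} by move=> y; exact: knight_in.
have phi_lt (y : 'I_m * 'I_n) : y.1 * h + 0 < m * h by apply: lt_mul_add.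
pose phi y : 'I_(m * h) * 'I_n := (Ordinal (phi_lt y), y.2).
have phi_rel y : relK (phi y) y by split => //=; rewrite addn0.
have phiE y : y \in D -> phi y \in E.
  move=> yD; rewrite memK; suff -> : (projR (phi y).1, (phi y).2) = y by [].
  by rewrite [RHS]surjective_pairing; congr pair; apply/val_inj; rewrite /= divnMDl // div0n addn0.
split.
- case=> _ Hg.
  case: (set_0Vmem D) => [D0 | [y0 y0D]].
    have E0 : E = set0 by apply/setP => x; rewrite memK D0 !inE.
    by rewrite E0; split => x; rewrite inE.
  apply: (@cyc_one _ f E (phi y0) (h * #|D|)) => //; first exact: phiE.
  + move=> k; apply/eqP/idP => [Ek|].
    * have := level_iter k h0 (phiE _ y0D); rewrite Ek /=.
      rewrite !addn0 modnMl modnMDl => /esym kh.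
      have kE : k = h * (k %/ h) by rewrite mulnC {1}(divn_eq k h) kh addn0.
      have := step_hj (k %/ h) h0 y0D (phi_rel y0).
      rewrite -kE Ek => r.
      have := rel_eq h0 (phi_rel y0) r; rewrite eqxx eq_sym (Hg y0 y0D) => /esym dk.
      by rewrite kE dvdn_pmul2l.
    * move=> /dvdnP[q ->]; apply/eqP.
      have -> : q * (h * #|D|) = h * (#|D| * q) by rewrite [in LHS]mulnC -mulnA.
      have r := step_hj (#|D| * q) h0 y0D (phi_rel y0).
      have : iter (#|D| * q) g y0 == y0 by rewrite Hg // dvdn_mulr.
      by rewrite -(rel_eq h0 r (phi_rel y0)).
  + by rewrite card_E // mulnC.
- case=> _ Hf; split => // y yD k.
  have r := step_hj k h0 yD (phi_rel y).
  by rewrite -(rel_eq h0 r (phi_rel y)) Hf ?phiE // card_E // mulnC dvdn_pmul2l.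
Qed.
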